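(* Let $i\ge 3$ and $k\ge 3$ be integers. Then: (a) $g_1(L_i,L_{i+2},L_{i+k})=(2L_i-1)L_{i+2}-L_i$ whenever $k\ge i+4$; (b) $g_1(L_i,L_{i+2},L_{2i+3})=(F_{i+3}-1)L_{i+2}-L_i$; (c) $g_1(L_i,L_{i+2},L_{2i+2})=(3F_{i-1}-1)L_{i+2}+L_{2i+2}-L_i$; (d) if $r=\lfloor (L_i-1)/F_k\rfloor\ge 1$ (equivalently $k\le i+1$), then $$g_1(L_i,L_{i+2},L_{i+k})=\begin{cases}(L_i-rF_k-1)L_{i+2}+(r+1)L_{i+k}-L_i & \text{if } (L_i-rF_k)L_{i+2}\ge F_{k-2}L_i,\\ (F_k-1)L_{i+2}+rL_{i+k}-L_i & \text{if } (L_i-rF_k)L_{i+2}< F_{k-2}L_i.\end{cases}$$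
   Context: Fibonacci numbers: $F_0=0$, $F_1=1$, $F_n=F_{n-1}+F_{n-2}$. Lucas numbers: $L_0=2$, $L_1=1$, $L_n=L_{n-1}+L_{n-2}$. For positive integers $a_1,\dots,a_l$ with $\gcd(a_1,\dots,a_l)=1$ and an integer $n$, let $d(n;a_1,\dots,a_l)$ be the number of tuples $(x_1,\dots,x_l)$ of nonnegative integers with $a_1x_1+\dots+a_lx_l=n$. For a nonnegative integer $p$, the $p$-Frobenius number $g_p(a_1,\dots,a_l)$ is the largest integer $n$ with $d(n;a_1,\dots,a_l)\le p$. *)

(* Defs.v *)
From mathcomp Require Import all_boot all_order all_algebra.
Set Implicit Arguments. Unset Strict Implicit. Unset Printing Implicit Defensive.
Import Order.TTheory GRing.Theory Num.Theory.

Fixpoint fib (n : nat) : nat :=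
  match n with
  | 0 => 0
  | 1 => 1
  | (m.+1 as p).+1 => fib p + fib m
  end.

Fixpoint lucas (n : nat) : nat :=
  match n with
  | 0 => 2
  | 1 => 1
  | (m.+1 as p).+1 => lucas p + lucas m
  end.

(* Since all a_i are positive
   (standing assumption), every x_i is at most n, so it suffices to range
   over x_i in {0,...,n}. *)
Definition dnat (a : seq nat) (n : nat) : nat :=
  #|[set x : {ffun 'I_(size a) -> 'I_n.+1} |
       \sum_(j < size a) nth 0 a j * x j == n]|.

Definition dcount (a : seq nat) (n : int) : nat :=
  match n with
  | Posz m => dnat a m
  | Negz _ => 0
  end.

Definition is_pFrobenius (p : nat) (a : seq nat) (g : int) : Prop :=
  (dcount a g <= p)%N /\ (forall n : int, (g < n)%R -> (p < dcount a n)%N).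

(* Main.v *)
Require Import Defs.
From mathcomp Require Import all_boot all_order all_algebra.
From mathcomp Require Import zify ring.
Import Order.TTheory GRing.Theory Num.Theory.

Module Helpers.
Local Set Implicit Arguments. Local Unset Strict Implicit. Local Unset Printing Implicit Defensive.


Lemma sum3 a b c m (f : {ffun 'I_(size [:: a; b; c]) -> 'I_m.+1}) :
  \sum_(j < size [:: a; b; c]) nth 0 [:: a; b; c] j * f j =
  a * f (@Ordinal 3 0 isT) + b * f (@Ordinal 3 1 isT) + c * f (@Ordinal 3 2 isT).
Proof.
rewrite /= !big_ord_recl big_ord0 /= addn0 addnA.
have -> : (lift ord0 (lift ord0 ord0) : 'I_3) = Ordinal (isT : (2 < 3)%N) by exact: val_inj.
have -> : (lift ord0 ord0 : 'I_3) = Ordinal (isT : (1 < 3)%N) by exact: val_inj.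
have -> : (ord0 : 'I_3) = Ordinal (isT : (0 < 3)%N) by exact: val_inj.
by [].
Qed.

Definition mkf m (x y z : nat) : {ffun 'I_3 -> 'I_m.+1} :=
  [ffun j : 'I_3 => inord (nth 0 [:: x; y; z] j)].

Lemma dnat_ge2 a b c m x1 y1 z1 x2 y2 z2 :
  (0 < a)%N -> (0 < b)%N -> (0 < c)%N ->
  a * x1 + b * y1 + c * z1 = m -> a * x2 + b * y2 + c * z2 = m ->
  (y1 != y2) || (z1 != z2) -> (1 < dnat [:: a; b; c] m)%N.
Proof.
move=> a0 b0 c0 e1 e2 ne; apply/card_gt1P.
have hb x y z : a * x + b * y + c * z = m -> [/\ x < m.+1, y < m.+1 & z < m.+1]%N.
  by move=> e; split; nia.
have [hx1 hy1 hz1] := hb _ _ _ e1; have [hx2 hy2 hz2] := hb _ _ _ e2.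
exists (mkf m x1 y1 z1), (mkf m x2 y2 z2); split.
- rewrite inE sum3 !ffunE /= !inordK //; exact/eqP.
- rewrite inE sum3 !ffunE /= !inordK //; exact/eqP.
- apply/negP => /eqP E; move: ne.
  move/ffunP: E => E.
  have := congr1 val (E (@Ordinal 3 1 isT)).
  have := congr1 val (E (@Ordinal 3 2 isT)).
  rewrite /= !ffunE /= !inordK // => -> ->; by rewrite !eqxx.
Qed.

Lemma dnat_le1 a b c m :
  (forall x y z x' y' z', a * x + b * y + c * z = m -> a * x' + b * y' + c * z' = m ->
     [/\ x = x', y = y' & z = z']) -> (dnat [:: a; b; c] m <= 1)%N.
Proof.
move=> H; apply/card_le1_eqP => f g; rewrite !inE !sum3 => /eqP ef /eqP eg.
have [h0 h1 h2] := H _ _ _ _ _ _ ef eg.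
apply/ffunP => j; apply/val_inj.
case: j => [[|[|[|j]]] hj] //=.
- by rewrite (_ : Ordinal hj = Ordinal (isT : (0 < 3)%N)) //; exact: val_inj.
- by rewrite (_ : Ordinal hj = Ordinal (isT : (1 < 3)%N)) //; exact: val_inj.
- by rewrite (_ : Ordinal hj = Ordinal (isT : (2 < 3)%N)) //; exact: val_inj.
Qed.


Lemma class_exists a b m : (0 < a)%N -> coprime a b ->
  exists Y0, (Y0 < a)%N /\ (b * Y0) %% a = m %% a.
Proof.
move=> a0 cop; have [u _ hu] := Bezoutl b a0.
move: hu; rewrite (eqP cop) => /dvdnP [k hk].
exists ((m * (a - 1) * u) %% a); split; first by rewrite ltn_mod.
rewrite modnMmr.
have h1 : (b * (m * (a - 1) * u) + m * (a - 1)) %% a = 0.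
  have -> : b * (m * (a - 1) * u) + m * (a - 1) = (m * (a - 1) * k) * a.
    rewrite -[(m * (a - 1) * k) * a]mulnA -hk; ring.
  by rewrite modnMl.
have h2 : (m + m * (a - 1)) %% a = 0.
  have -> : m + m * (a - 1) = m * a by rewrite -{1}(muln1 m) -mulnDr subnKC.
  by rewrite modnMl.
apply/eqP; rewrite -(eqn_modDr (m * (a - 1))) h1 h2 //.
Qed.

Lemma divides_cases a b N M s1 s2 : coprime a b ->
  b * N + a * s1 = b * M + a * s2 -> exists t, N = M + a * t \/ M = N + a * t.
Proof.
move=> cop e.
case: (leqP M N) => hNM.
- have : (a %| b * (N - M)).
    apply/dvdnP; exists (s2 - s1); rewrite mulnBr mulnBl; nia.
  rewrite Gauss_dvdr // => /dvdnP [t ht]; exists t; left; nia.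
- have : (a %| b * (M - N)).
    apply/dvdnP; exists (s1 - s2); rewrite mulnBr mulnBl; nia.
  rewrite Gauss_dvdr // => /dvdnP [t ht]; exists t; right; nia.
Qed.

Lemma fit a V G m : (0 < a)%N -> (V <= G)%N -> V %% a = m %% a -> (G < m + a)%N ->
  exists x, a * x + V = m.
Proof.
move=> a0 hV hm hG.
have hVm : (V <= m)%N.
  rewrite leqNgt; apply/negP => lt.
  have : (a %| V - m) by rewrite -eqn_mod_dvd ?hm // ltnW.
  case/dvdnP => t ht.
  case: t ht => [|t] ht; nia.
have : (a %| m - V) by rewrite -eqn_mod_dvd ?hm.
case/dvdnP => t ht; exists t; nia.
Qed.

Lemma class_val a b c p q y z Y0 t : c + q * a = p * b -> y + p * z = Y0 + a * t ->
  (b * y + c * z) %% a = (b * Y0) %% a.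
Proof.
move=> hc hN.
have e : b * y + c * z + a * (q * z) = b * Y0 + a * (b * t).
  have h1 : b * (y + p * z) = b * (Y0 + a * t) by rewrite hN.
  have h2 : (c + q * a) * z = p * b * z by rewrite hc.
  nia.
have := congr1 (modn^~ a) e.
by rewrite [in RHS]addnC [in LHS]addnC (mulnC a (q * z)) (mulnC a (b * t)) !modnMDl.
Qed.


Lemma exist_gen a b c p q G m :
  (0 < a)%N -> (0 < b)%N -> (0 < c)%N -> c + q * a = p * b -> coprime a b ->
  (G < m + a)%N ->
  (forall Y0, (Y0 < a)%N -> exists y1 z1 y2 z2 t1 t2,
     [/\ y1 + p * z1 = Y0 + a * t1, y2 + p * z2 = Y0 + a * t2,
         (b * y1 + c * z1 <= G)%N, (b * y2 + c * z2 <= G)%N &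
         (y1 != y2) || (z1 != z2)]) ->
  (1 < dnat [:: a; b; c] m)%N.
Proof.
move=> a0 b0 c0 hc cop hG H.
have [Y0 [hY0 hm]] := class_exists m a0 cop.
have [y1 [z1 [y2 [z2 [t1 [t2 [e1 e2 v1 v2 ne]]]]]]] := H Y0 hY0.
have [x1 hx1] := fit a0 v1 (etrans (class_val hc e1) hm) hG.
have [x2 hx2] := fit a0 v2 (etrans (class_val hc e2) hm) hG.
apply: (dnat_ge2 (x1 := x1) (x2 := x2) a0 b0 c0 _ _ ne); rewrite -addnA //.
Qed.

Lemma uniq_gen a b c p q Y0 zs G :
  (0 < a)%N -> (0 < p)%N -> c + q * a = p * b -> coprime a b ->
  (Y0 < a)%N -> (Y0 < p)%N -> (Y0 + a < p * zs.+1)%N ->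
  G + q * a * zs = b * (Y0 + a) -> (p * (G - a) < c * (Y0 + 2 * a))%N ->
  (a <= G)%N -> (dnat [:: a; b; c] (G - a) <= 1)%N.
Proof.
move=> a0 p0 hc cop hY0a hY0p hzs hG hbig aG.
suff K : forall x y z, a * x + b * y + c * z = G - a -> y = Y0 /\ z = 0.
  apply: dnat_le1 => x y z x' y' z' e e'.
  have [ey ez] := K _ _ _ e; have [ey' ez'] := K _ _ _ e'; subst.
  split => //; apply/eqP; rewrite -(eqn_pmul2l a0); apply/eqP; lia.
move=> x y z e.
set N := y + p * z.
have key : b * N + a * (x + 1 + q * zs) = b * (Y0 + a) + a * (q * z).
  have h2 : (c + q * a) * z = p * b * z by rewrite hc.
  rewrite /N; nia.
have [t [ht|ht]] := divides_cases cop key.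
- case: t ht => [|t] ht.
  +
    have zle : (z <= zs)%N by rewrite /N in ht; nia.
    have h2 : (c + q * a) * z = p * b * z by rewrite hc.
    exfalso; rewrite /N in ht; nia.
  + exfalso.
    have h1 : (c * N <= p * (b * y + c * z))%N.
      have h2 : (c + q * a) * y = p * b * y by rewrite hc.
      rewrite /N; nia.
    have h3 : (c * (Y0 + 2 * a) <= c * N)%N by apply: leq_mul => //; nia.
    nia.
- case: t ht => [|[|t]] ht.
  + exfalso.
    have zle : (z <= zs)%N by rewrite /N in ht; nia.
    have h2 : (c + q * a) * z = p * b * z by rewrite hc.
    rewrite /N in ht; nia.
  + have z0 : z = 0 by rewrite /N in ht; nia.
    by split => //; rewrite /N z0 in ht; nia.
  + exfalso; nia.
Qed.


Lemma fibSS n : fib n.+2 = fib n.+1 + fib n. Proof. by []. Qed.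
Lemma lucSS n : lucas n.+2 = lucas n.+1 + lucas n. Proof. by []. Qed.

Lemma fib_lucas m n : fib n.+2 * lucas (m + 2) = lucas (m + n.+2) + fib n * lucas m.
Proof.
suff : fib n.+2 * lucas (m + 2) = lucas (m + n.+2) + fib n * lucas m /\
       fib n.+3 * lucas (m + 2) = lucas (m + n.+3) + fib n.+1 * lucas m by case.
elim: n => [|n [IH1 IH2]].
  split; first by rewrite /= mul1n mul0n addn0.
  by rewrite /= addn0 mul1n !addnS addn0 !lucSS addn0; lia.
split => //.
rewrite fibSS mulnDl IH1 IH2 fibSS mulnDl !addnS lucSS; rewrite !lucSS; lia.
Qed.

Lemma lucas_pos n : (0 < lucas n)%N.
Proof. elim: n {-2}n (leqnn n) => [|N IH] [|[|n]] //= hn; rewrite addn_gt0 IH //; lia. Qed.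

Lemma fib_pos n : (0 < fib n.+1)%N.
Proof. elim: n {-2}n (leqnn n) => [|N IH] [|[|n]] //= hn; rewrite addn_gt0 IH //; lia. Qed.

Lemma fib_le n : (fib n <= fib n.+1)%N.
Proof. case: n => // n; rewrite fibSS; lia. Qed.

Lemma fib_mono m n : (m <= n)%N -> (fib m <= fib n)%N.
Proof.
move/subnK => <-; elim: (n - m) => // d IH; rewrite addSn; exact: leq_trans IH (fib_le _).
Qed.

Lemma fib2 n : (2 * fib n <= fib n.+2)%N.
Proof. rewrite fibSS; have := fib_le n; lia. Qed.

Lemma luc_le n : (lucas n.+1 <= lucas n.+2)%N.
Proof. rewrite lucSS; lia. Qed.

Lemma luc2 n : (2 * lucas n.+1 <= lucas n.+3)%N.
Proof. rewrite lucSS; have := luc_le n; lia. Qed.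

Lemma lucas_coprime n : coprime (lucas n) (lucas n.+1).
Proof.
elim: n => // n IH; rewrite lucSS /coprime gcdnDl gcdnC; exact: IH.
Qed.

Lemma lucas_coprime2 n : coprime (lucas n) (lucas n.+2).
Proof. rewrite lucSS /coprime gcdnDr; exact: lucas_coprime. Qed.

Lemma lucas_fib n : lucas n.+1 = fib n + fib n.+2.
Proof.
suff : lucas n.+1 = fib n + fib n.+2 /\ lucas n.+2 = fib n.+1 + fib n.+3 by case.
elim: n => [|n [IH1 IH2]]; first by [].
split => //; rewrite lucSS IH1 IH2 !fibSS; lia.
Qed.


Lemma bridge a b c G : (a <= G)%N -> (dnat [:: a; b; c] (G - a) <= 1)%N ->
  (forall m, (G < m + a)%N -> (1 < dnat [:: a; b; c] m)%N) ->
  is_pFrobenius 1 [:: a; b; c] (Posz (G - a)).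
Proof.
move=> aG h1 h2; split => // -[m|m] //= hm.
apply: h2; move: hm; rewrite ltz_nat; lia.
Qed.

Lemma partA a b c p q : (0 < a)%N -> (0 < b)%N -> (0 < c)%N ->
  c + q * a = p * b -> coprime a b -> (2 * a <= p)%N -> (2 * q <= p)%N -> (2 * a <= b)%N ->
  is_pFrobenius 1 [:: a; b; c] (Posz ((2 * a - 1) * b - a)).
Proof.
move=> a0 b0 c0 hc cop hp hq hb.
have e3 : (2 * a - 1) * b = 2 * a * b - b by rewrite mulnBl mul1n.
have kab : (2 * a <= 2 * a * b)%N by rewrite leq_pmulr.
have kab' : (2 * b <= 2 * a * b)%N by rewrite mulnAC leq_pmulr.
apply: bridge.
  rewrite e3; lia.
- apply: (uniq_gen (p := p) (q := q) (Y0 := a - 1) (zs := 0)) => //.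
  + lia.
  + lia.
  + lia.
  + lia.
  + rewrite muln0 addn0 mulnC; congr (b * _); lia.
  + clear cop.
    have e1 : a - 1 + 2 * a = 3 * a - 1 by lia.
    have e2 : (2 * a - 1) * b - a = 2 * a * b - b - a by rewrite e3; lia.
    rewrite e1 e2 !mulnBr !mulnA.
    have k1 : (6 * q * a * a <= 3 * p * a * a)%N.
      have := leq_mul hq (leqnn (3 * a * a)); lia.
    have k2 : (2 * p * a * a <= p * a * b)%N.
      have := leq_mul (leqnn (p * a)) hb; lia.
    have k3 : (c * a + q * a * a = p * b * a)%N by rewrite -hc; ring.
    have k5 : (p * b * 1 <= p * b * (2 * a))%N by rewrite leq_mul2l; apply/orP; right; lia.
    have k6 : (a * p * 1 <= a * p * b)%N by rewrite leq_mul2l; apply/orP; right; lia.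
    have k7 : (c * 1 <= c * a)%N by rewrite leq_mul2l; apply/orP; right; lia.
    lia.
  + rewrite e3; lia.
- move=> m hm; apply: (exist_gen (p := p) (q := q) (G := (2 * a - 1) * b)) => // Y0 hY0.
  exists Y0, 0, (Y0 + a), 0, 0, 1; split => //.
  + lia.
  + rewrite muln0 addn0 muln1 //.
  + rewrite e3; have : (b * Y0 <= b * (a - 1))%N by rewrite leq_mul2l; lia.
    rewrite mulnBr muln1; lia.
  + rewrite e3; have : (b * (Y0 + a) <= b * (2 * a - 1))%N by rewrite leq_mul2l; lia.
    rewrite mulnBr muln1; lia.
  + apply/orP; left; apply/negP => /eqP; lia.
Qed.


Lemma partB a b c p1 d1 q : (0 < a)%N -> (0 < b)%N -> (0 < c)%N ->
  c + q * a = p1.+1 * b -> coprime a b -> p1.+1 + d1.+1 = 2 * a -> (a <= p1)%N ->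
  (2 * q <= p1.+1)%N -> (2 * a <= b)%N -> (d1.+1 * b <= q * a)%N ->
  is_pFrobenius 1 [:: a; b; c] (Posz (p1 * b - a)).
Proof.
move=> a0 b0 c0 hc cop hd hp hq hb hB.
have kab : (p1 * 1 <= p1 * b)%N by rewrite leq_mul2l b0 orbT.
apply: bridge.
  lia.
- apply: (uniq_gen (p := p1.+1) (q := q) (Y0 := p1 - a) (zs := 0)) => //.
  + lia.
  + lia.
  + lia.
  + rewrite muln0 addn0 mulnC; congr (b * _); lia.
  + clear cop.
    have e1 : p1 - a + 2 * a = p1 + a by lia.
    rewrite e1 !mulnBr !mulnDr.
    have k1 : (2 * q * (a * (p1 + a)) <= p1.+1 * (a * (p1 + a)))%N by rewrite leq_mul2r hq orbT.
    have k2 : (p1.+1 * a * (p1 + a) <= p1.+1 * a * (3 * a))%N by rewrite leq_mul2l; apply/orP; right; lia.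
    have k3 : (p1.+1 * a * (2 * a) <= p1.+1 * a * b)%N by rewrite leq_mul2l hb orbT.
    have k4 : (c + q * a) * (p1 + a) = p1.+1 * b * (p1 + a) by rewrite hc.
    have k5 : (p1 * b >= a)%N by lia.
    have k6 : (p1.+1 * b * a >= p1.+1 * a)%N by rewrite mulnAC leq_pmulr.
    lia.
  + lia.
- move=> m hm; apply: (exist_gen (p := p1.+1) (q := q) (G := p1 * b)) => // Y0 hY0.
  have v1 : (b * Y0 <= p1 * b)%N by rewrite mulnC leq_mul2r; apply/orP; right; lia.
  case: (leqP (Y0 + a) p1) => hY.
  + exists Y0, 0, (Y0 + a), 0, 0, 1; split => //.
    * lia.
    * rewrite muln0 addn0 muln1 //.
    * lia.
    * have : (b * (Y0 + a) <= b * p1)%N by rewrite leq_mul2l hY orbT.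
      lia.
    * apply/orP; left; apply/negP => /eqP; lia.
  + exists Y0, 0, (Y0 + a - p1.+1), 1, 0, 1; split => //.
    * lia.
    * lia.
    * lia.
    * have : (b * (Y0 + a - p1.+1) <= b * d1)%N by rewrite leq_mul2l; apply/orP; right; lia.
      have : (d1.+1 * b = d1 * b + b) by rewrite mulSn addnC.
      have : (p1.+1 * b = p1 * b + b) by rewrite mulSn addnC.
      lia.
    * by rewrite orbT.
Qed.

Lemma partC a b c p1 d1 q : (0 < a)%N -> (0 < b)%N -> (0 < c)%N ->
  c + q * a = p1.+1 * b -> coprime a b -> p1.+1 + d1.+1 = 2 * a -> (a <= p1)%N ->
  (2 * q <= p1.+1)%N -> (2 * a <= b)%N -> (q * a <= d1.+1 * b)%N ->
  is_pFrobenius 1 [:: a; b; c] (Posz (d1 * b + c - a)).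
Proof.
move=> a0 b0 c0 hc cop hd hp hq hb hC.
have kD : d1.+1 * b = d1 * b + b by rewrite mulSn addnC.
have kP : p1.+1 * b = p1 * b + b by rewrite mulSn addnC.
have kpb : (p1 * b <= d1 * b + c)%N by lia.
have aG : (a <= d1 * b + c)%N.
  have k1 : (2 * q * a <= p1.+1 * a)%N by rewrite leq_mul2r hq orbT.
  have k2 : (p1.+1 * a <= p1.+1 * b)%N by rewrite leq_mul2l; apply/orP; right; lia.
  have k3 : (p1.+1 * 1 <= p1.+1 * b)%N by rewrite leq_mul2l b0 orbT.
  lia.
apply: bridge => //.
- apply: (uniq_gen (p := p1.+1) (q := q) (Y0 := a - 1) (zs := 1)) => //.
  + lia.
  + lia.
  + lia.
  + rewrite muln1 (_ : a - 1 + a = d1 + p1.+1); last lia.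
    rewrite -addnA hc mulnDr (mulnC b d1) (mulnC b p1.+1) //.
  + clear cop.
    have e1 : a - 1 + 2 * a = p1.+1 + (a + d1) by lia.
    have e2 : d1 * b + c - a + a = d1 * b + c by lia.
    have k1 : (2 * q * (a * (a + d1)) <= p1.+1 * (a * (a + d1)))%N by rewrite leq_mul2r hq orbT.
    have k2 : (p1.+1 * a * (a + d1) <= p1.+1 * a * (2 * a))%N by rewrite leq_mul2l; apply/orP; right; lia.
    have k3 : (p1.+1 * a * (2 * a) <= p1.+1 * a * b)%N by rewrite leq_mul2l hb orbT.
    have k4 : (c + q * a) * (a + d1) = p1.+1 * b * (a + d1) by rewrite hc.
    have k5 : p1.+1 * (d1 * b + c - a) + p1.+1 * a = p1.+1 * (d1 * b + c) by rewrite -mulnDr e2.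
    rewrite e1 mulnDr.
    have k6 : (0 < p1.+1 * a)%N by rewrite muln_gt0 a0.
    lia.
- move=> m hm; apply: (exist_gen (p := p1.+1) (q := q) (G := d1 * b + c)) => // Y0 hY0.
  have v1 : (b * Y0 <= p1 * b)%N by rewrite mulnC leq_mul2r; apply/orP; right; lia.
  case: (leqP (Y0 + a) p1) => hY.
  + exists Y0, 0, (Y0 + a), 0, 0, 1; split => //.
    * lia.
    * rewrite muln0 addn0 muln1 //.
    * lia.
    * have : (b * (Y0 + a) <= b * p1)%N by rewrite leq_mul2l hY orbT.
      lia.
    * apply/orP; left; apply/negP => /eqP; lia.
  + exists Y0, 0, (Y0 + a - p1.+1), 1, 0, 1; split => //.
    * lia.
    * lia.
    * lia.
    * have : (b * (Y0 + a - p1.+1) <= b * d1)%N by rewrite leq_mul2l; apply/orP; right; lia.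
      lia.
    * by rewrite orbT.
Qed.


Lemma D_exist a b c p1 q r h1 G m : (0 < a)%N -> (0 < b)%N -> (0 < c)%N ->
  c + q * a = p1.+1 * b -> coprime a b -> a = r * p1.+1 + h1.+1 -> (h1 <= p1)%N ->
  (1 <= r)%N -> (2 * q <= p1.+1)%N -> (2 * a <= b)%N ->
  (b * p1 + c * r <= G)%N -> (b * (h1 + p1.+1) + c * r <= G + c)%N ->
  (b * h1 + c * r.+1 <= G)%N -> (G < m + a)%N ->
  (1 < dnat [:: a; b; c] m)%N.
Proof.
move=> a0 b0 c0 hc cop ha hh hr hq hb H1 H2 H3 hm.
have k2c : (p1.+1 * b <= 2 * c)%N.
  have : (2 * q * a <= p1.+1 * a)%N by rewrite leq_mul2r hq orbT.
  have : (p1.+1 * a <= p1.+1 * b)%N by rewrite leq_mul2l; apply/orP; right; lia.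
  lia.
apply: (exist_gen (p := p1.+1) (q := q) (G := G)) => // Y0 hY0.
have dY := divn_eq Y0 p1.+1.
set z0 := Y0 %/ p1.+1 in dY *; set y0 := Y0 %% p1.+1 in dY *.
have hy0 : (y0 < p1.+1)%N by rewrite ltn_mod.
have hz0 : (z0 <= r)%N.
  rewrite leqNgt; apply/negP => lt.
  have : (r.+1 * p1.+1 <= z0 * p1.+1)%N by rewrite leq_mul2r lt orbT.
  lia.
have vy : (b * y0 <= b * p1)%N by rewrite leq_mul2l; apply/orP; right; lia.
case: z0 dY hz0 => [|z] dY hz0.
-
  have vY : (b * Y0 <= b * p1)%N by rewrite dY mul0n add0n.
  case: (leqP (Y0 + h1.+1) p1) => hY.
  + exists Y0, 0, (Y0 + h1.+1), r, 0, 1; split.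
    * lia.
    * rewrite ha mulnC; lia.
    * lia.
    * have : (b * (Y0 + h1.+1) <= b * p1)%N by rewrite leq_mul2l hY orbT.
      lia.
    * apply/orP; left; apply/negP => /eqP; lia.
  + exists Y0, 0, (Y0 + h1.+1 - p1.+1), r.+1, 0, 1; split.
    * lia.
    * rewrite ha mulnC mulnS; lia.
    * lia.
    * have : (b * (Y0 + h1.+1 - p1.+1) <= b * h1)%N by rewrite leq_mul2l; apply/orP; right; lia.
      lia.
    * by rewrite orbT.
- exists y0, z.+1, (y0 + p1.+1), z, 0, 0; split.
  + lia.
  + lia.
  + have : (c * z.+1 <= c * r)%N by rewrite leq_mul2l; apply/orP; right; lia.
    lia.
  + case: (ltnP z.+1 r) => hzr.
    * have : (c * z.+2 <= c * r)%N by rewrite leq_mul2l hzr orbT.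
      have : (b * (y0 + p1.+1) <= b * (p1 + p1.+1))%N by rewrite leq_mul2l; apply/orP; right; lia.
      rewrite !mulnS; lia.
    * have ezr : z.+1 = r by lia.
      have hyh : (y0 <= h1)%N.
        rewrite leqNgt; apply/negP => lt.
        have : (z.+1 * p1.+1 = r * p1.+1) by rewrite ezr.
        lia.
      have : (b * (y0 + p1.+1) <= b * (h1 + p1.+1))%N by rewrite leq_mul2l; apply/orP; right; lia.
      have : (c * z.+1 = c * r) by rewrite ezr.
      rewrite mulnS; lia.
  + apply/orP; left; apply/negP => /eqP; lia.
Qed.

Lemma aG_lem a b c p1 q : (0 < a)%N -> c + q * a = p1.+1 * b -> (2 * q <= p1.+1)%N -> (2 * a <= b)%N ->
  (a <= c)%N.
Proof.
move=> a0 hc hq hb.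
have : (2 * q * a <= p1.+1 * a)%N by rewrite leq_mul2r hq orbT.
have : (p1.+1 * a <= p1.+1 * b)%N by rewrite leq_mul2l; apply/orP; right; lia.
have : (1 * a <= p1.+1 * a)%N by rewrite leq_mul2r; apply/orP; right; lia.
lia.
Qed.

Lemma partD1 a b c p1 q r h1 : (0 < a)%N -> (0 < b)%N -> (0 < c)%N ->
  c + q * a = p1.+1 * b -> coprime a b -> a = r * p1.+1 + h1.+1 -> (h1 <= p1)%N ->
  (1 <= r)%N -> (2 * q <= p1.+1)%N -> (2 * a <= b)%N -> (q * a <= h1.+1 * b)%N ->
  is_pFrobenius 1 [:: a; b; c] (Posz (h1 * b + r.+1 * c - a)).
Proof.
move=> a0 b0 c0 hc cop ha hh hr hq hb hcase.
have k2c : (p1.+1 * b <= 2 * c)%N.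
  have : (2 * q * a <= p1.+1 * a)%N by rewrite leq_mul2r hq orbT.
  have : (p1.+1 * a <= p1.+1 * b)%N by rewrite leq_mul2l; apply/orP; right; lia.
  lia.
have acc := aG_lem a0 hc hq hb.
have rp : (p1.+1 <= r * p1.+1)%N by rewrite leq_pmull.
have kc : (c <= r.+1 * c)%N by rewrite leq_pmull.
apply: bridge.
  lia.
- apply: (uniq_gen (p := p1.+1) (q := q) (Y0 := p1) (zs := r.+1)) => //.
  + lia.
  + have : (p1.+1 * r.+2 = p1.+1 * r + 2 * p1.+1) by rewrite !mulnS; lia.
    lia.
  + have : (r.+1 * (c + q * a) = r.+1 * (p1.+1 * b)) by rewrite hc.
    lia.
  + clear cop.
    have k1 : (2 * q * (a * (a + h1)) <= p1.+1 * (a * (a + h1)))%N by rewrite leq_mul2r hq orbT.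
    have k2 : (p1.+1 * a * (a + h1) <= p1.+1 * a * (2 * a))%N by rewrite leq_mul2l; apply/orP; right; lia.
    have k3 : (p1.+1 * a * (2 * a) <= p1.+1 * a * b)%N by rewrite leq_mul2l hb orbT.
    have k4 : (c + q * a) * (a + h1) = p1.+1 * b * (a + h1) by rewrite hc.
    have k5 : c * a = c * (r * p1.+1 + h1.+1) by rewrite -ha.
    have k6 : p1.+1 * (h1 * b + r.+1 * c - a) + p1.+1 * a = p1.+1 * (h1 * b + r.+1 * c).
      by rewrite -mulnDr subnK //; lia.
    have k7 : (0 < p1.+1 * a)%N by rewrite muln_gt0 a0.
    lia.
  + lia.
- move=> m hm; apply: (D_exist (p1 := p1) (q := q) (r := r) (h1 := h1) (G := h1 * b + r.+1 * c)) => //.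
  + lia.
  + lia.
  + lia.
Qed.

Lemma partD2 a b c p1 q r h1 : (0 < a)%N -> (0 < b)%N -> (0 < c)%N ->
  c + q * a = p1.+1 * b -> coprime a b -> a = r * p1.+1 + h1.+1 -> (h1 <= p1)%N ->
  (1 <= r)%N -> (2 * q <= p1.+1)%N -> (2 * a <= b)%N -> (h1.+1 * b < q * a)%N ->
  is_pFrobenius 1 [:: a; b; c] (Posz (p1 * b + r * c - a)).
Proof.
move=> a0 b0 c0 hc cop ha hh hr hq hb hcase.
have k2q : (2 * q * a <= p1.+1 * b)%N.
  have : (2 * q * a <= p1.+1 * a)%N by rewrite leq_mul2r hq orbT.
  have : (p1.+1 * a <= p1.+1 * b)%N by rewrite leq_mul2l; apply/orP; right; lia.
  lia.
have hh' : (h1 < p1)%N.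
  rewrite ltn_neqAle hh andbT; apply/negP => /eqP e; rewrite e in hcase; lia.
have acc := aG_lem a0 hc hq hb.
have rp : (p1.+1 <= r * p1.+1)%N by rewrite leq_pmull.
have kc : (c <= r * c)%N by rewrite leq_pmull.
apply: bridge.
  lia.
- apply: (uniq_gen (p := p1.+1) (q := q) (Y0 := p1 - h1.+1) (zs := r)) => //.
  + lia.
  + lia.
  + have : (p1.+1 * r.+1 = p1.+1 * r + p1.+1) by rewrite !mulnS; lia.
    lia.
  + have : (r * (c + q * a) = r * (p1.+1 * b)) by rewrite hc.
    have : (b * (p1 - h1.+1 + a) = b * (p1 + r * p1.+1)) by congr (_ * _); lia.
    lia.
  + clear cop.
    have e1 : p1 - h1.+1 + 2 * a = r * p1.+1 + (p1 + a) by lia.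
    rewrite e1 mulnDr.
    have k1 : (2 * q * (a * (p1 + a)) <= p1.+1 * (a * (p1 + a)))%N by rewrite leq_mul2r hq orbT.
    have k2 : (p1.+1 * a * (p1 + a) <= p1.+1 * a * (2 * a))%N by rewrite leq_mul2l; apply/orP; right; lia.
    have k3 : (p1.+1 * a * (2 * a) <= p1.+1 * a * b)%N by rewrite leq_mul2l hb orbT.
    have k4 : (c + q * a) * (p1 + a) = p1.+1 * b * (p1 + a) by rewrite hc.
    have k6 : p1.+1 * (p1 * b + r * c - a) + p1.+1 * a = p1.+1 * (p1 * b + r * c).
      by rewrite -mulnDr subnK //; lia.
    have k7 : (0 < p1.+1 * a)%N by rewrite muln_gt0 a0.
    lia.
  + lia.
- move=> m hm; apply: (D_exist (p1 := p1) (q := q) (r := r) (h1 := h1) (G := p1 * b + r * c)) => //.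
  + lia.
  + lia.
  + lia.
Qed.

Lemma luc_fib5 n : (2 * lucas n.+1 <= fib n.+4.+1)%N.
Proof. have := fib_le n; rewrite lucas_fib !fibSS; lia. Qed.

Lemma fibXY j : [/\ fib j.+2 = fib j + fib j.+1, fib j.+3 = fib j + 2 * fib j.+1,
  fib j.+4 = 2 * fib j + 3 * fib j.+1, fib j.+4.+1 = 3 * fib j + 5 * fib j.+1
  & fib j.+4.+2 = 5 * fib j + 8 * fib j.+1].
Proof. rewrite !fibSS; split; lia. Qed.


End Helpers.
Import Helpers.

Local Open Scope ring_scope.

Theorem theorem6 (i k : nat) (hi : (3 <= i)%N) (hk : (3 <= k)%N) :
  let F := fun n : nat => (fib n)%:Z in
  let L := fun n : nat => (lucas n)%:Z in
  let r := ((lucas i).-1 %/ fib k)%N in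
  [/\ ((i + 4 <= k)%N ->
        is_pFrobenius 1 [:: lucas i; lucas (i + 2); lucas (i + k)]
          ((2 * L i - 1) * L (i + 2)%N - L i)),
      is_pFrobenius 1 [:: lucas i; lucas (i + 2); lucas (2 * i + 3)]
          ((F (i + 3)%N - 1) * L (i + 2)%N - L i),
      is_pFrobenius 1 [:: lucas i; lucas (i + 2); lucas (2 * i + 2)]
          ((3 * F i.-1 - 1) * L (i + 2)%N + L (2 * i + 2)%N - L i)
    & ((1 <= r)%N ->
        is_pFrobenius 1 [:: lucas i; lucas (i + 2); lucas (i + k)]
          (if F k.-2 * L i <= (L i - r%:Z * F k) * L (i + 2)%N
           then (L i - r%:Z * F k - 1) * L (i + 2)%N + (r%:Z + 1) * L (i + k)%N - L i
           else (F k - 1) * L (i + 2)%N + r%:Z * L (i + k)%N - L i))].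
Proof.
move=> F L r; rewrite /F /L /r {F L r}.
case: i hi => [|[|[|j]]] // _; case: k hk => [|[|[|l]]] // _.
set a := lucas j.+3; set b := lucas (j.+3 + 2).
have a0 : (0 < a)%N := lucas_pos _.
have b0 : (0 < b)%N := lucas_pos _.
have cop : coprime a b by rewrite /b addn2; exact: lucas_coprime2.
have hb : (2 * a <= b)%N by rewrite /b addn2; exact: luc2.
have [X1 X2 X3 X4 X5] := fibXY j.
have XY : (fib j <= fib j.+1)%N := fib_le j.
have Y0 : (0 < fib j.+1)%N := fib_pos j.
have ea : (a = 3 * fib j + 4 * fib j.+1)%N by rewrite /a lucas_fib; lia.
have eb : (b = 7 * fib j + 11 * fib j.+1)%N.
  rewrite /b addn2 lucas_fib !fibSS; lia.
split.
-
  move=> hik.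
  set p := fib l.+3; set q := fib l.+1; set c := lucas (j.+3 + l.+3).
  have hc : (c + q * a = p * b)%N by rewrite /c /q /p /a /b fib_lucas.
  have c0 : (0 < c)%N := lucas_pos _.
  have hp : (2 * a <= p)%N.
    apply: leq_trans (luc_fib5 j.+2) _; apply: fib_mono; lia.
  have hq : (2 * q <= p)%N := fib2 _.
  have := partA a0 b0 c0 hc cop hp hq hb.
  have aG : (a <= (2 * a - 1) * b)%N by nia.
  have -> : (2 * (lucas j.+3)%:Z - 1) * (lucas (j.+3 + 2))%:Z - (lucas j.+3)%:Z =
            Posz ((2 * a - 1) * b - a)%N.
    rewrite -/a -/b; lia.
  done.
-
  set c := lucas (2 * j.+3 + 3).
  have c0 : (0 < c)%N := lucas_pos _.
  have ep : fib (j.+3 + 3) = fib j.+4.+2 by rewrite !addnS addn0.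
  have hc : (c + fib j.+4 * a = fib j.+4.+2 * b)%N.
    rewrite /c /a /b fib_lucas; congr (lucas _ + _); lia.
  have hq : (2 * fib j.+4 <= fib j.+4.+2)%N := fib2 _.
  rewrite ep.
  case: j X1 X2 X3 X4 X5 XY Y0 @a @b ea eb a0 b0 cop hb @c c0 ep hc hq
    => [|j] X1 X2 X3 X4 X5 XY Y0 a b ea eb a0 b0 cop hb c c0 ep hc hq.
  + have hp : (2 * a <= fib 6)%N by rewrite ea.
    have := partA a0 b0 c0 hc cop hp hq hb.
    have aG : (a <= (2 * a - 1) * b)%N by rewrite ea eb.
    have -> : ((fib 6)%:Z - 1) * (lucas (3 + 2))%:Z - (lucas 3)%:Z =
            Posz ((2 * a - 1) * b - a)%N.
      rewrite -/a -/b (_ : fib 6 = 2 * a)%N; last by rewrite ea.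
      lia.
    done.
  + set p1 := (fib j.+4.+3).-1.
    have ep1 : fib j.+4.+3 = p1.+1 by rewrite /p1 prednK // fib_pos.
    have jpos : (0 < fib j.+1)%N := fib_pos j.
    set d1 := (fib j.+1).-1.
    have ed1 : fib j.+1 = d1.+1 by rewrite /d1 prednK.
    rewrite ep1 in hc hq.
    have hd : (p1.+1 + d1.+1 = 2 * a)%N by rewrite -ep1 -ed1 X5 ea; lia.
    have hp : (a <= p1)%N by lia.
    have hB : (d1.+1 * b <= fib j.+4.+1 * a)%N.
      rewrite -ed1 X3 ea eb.
      have := leq_mul XY (leqnn (fib j.+1)).
      have := leq_mul XY (leqnn (fib j.+2)).
      lia.
    have := partB a0 b0 c0 hc cop hd hp hq hb hB.
    have aG : (a <= p1 * b)%N.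
      apply: leq_trans (leq_mul hp (_ : 1 <= b)%N) => //; lia.
    rewrite ep1.
    have -> : ((p1.+1)%:Z - 1) * (lucas (j.+4 + 2))%:Z - (lucas j.+4)%:Z =
            Posz (p1 * b - a)%N.
      rewrite -/a -/b; lia.
    done.
-
  set c := lucas (2 * j.+3 + 2).
  have c0 : (0 < c)%N := lucas_pos _.
  have hc : (c + fib j.+3 * a = fib j.+4.+1 * b)%N.
    rewrite /c /a /b fib_lucas; congr (lucas _ + _); lia.
  have hq : (2 * fib j.+3 <= fib j.+4.+1)%N := fib2 _.
  set p1 := (fib j.+4.+1).-1.
  have ep1 : fib j.+4.+1 = p1.+1 by rewrite /p1 prednK // fib_pos.
  set d1 := (3 * fib j.+2).-1.
  have ed1 : (3 * fib j.+2 = d1.+1)%N by rewrite /d1 prednK // X1; lia.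
  rewrite ep1 in hc hq.
  have hd : (p1.+1 + d1.+1 = 2 * a)%N by rewrite -ep1 -ed1 X4 X1 ea; lia.
  have hp : (a <= p1)%N by move: ep1; rewrite X4 ea; lia.
  have hC : (fib j.+3 * a <= d1.+1 * b)%N.
    rewrite -ed1 X2 X1 ea eb; clear; nia.
  have := partC a0 b0 c0 hc cop hd hp hq hb hC.
  have aG : (a <= d1 * b + c)%N.
    have := aG_lem a0 hc hq hb; lia.
  have e3 : (d1.+1 * b = 3 * fib j.+2 * b)%N by rewrite ed1.
  have -> : (3 * (fib j.+2)%:Z - 1) * (lucas (j.+3 + 2))%:Z + (lucas (2 * j.+3 + 2))%:Z
              - (lucas j.+3)%:Z = Posz (d1 * b + c - a)%N.
    rewrite -/a -/b -/c; lia.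
  done.
-
  set p := fib l.+3; set q := fib l.+1; set c := lucas (j.+3 + l.+3).
  set R := (a.-1 %/ p)%N.
  move=> hr.
  have c0 : (0 < c)%N := lucas_pos _.
  have hc : (c + q * a = p * b)%N by rewrite /c /q /p /a /b fib_lucas.
  have hq : (2 * q <= p)%N := fib2 _.
  set p1 := p.-1.
  have ep1 : p = p1.+1 by rewrite /p1 prednK // fib_pos.
  set h1 := (a.-1 %% p)%N.
  have ha : (a = R * p + h1.+1)%N.
    by rewrite /h1 /R addnS -divn_eq prednK.
  have hh : (h1 <= p1)%N.
    have : (h1 < p)%N by rewrite /h1 ltn_mod fib_pos.
    rewrite ep1; lia.
  have eab : (a * b = R * p * b + h1.+1 * b)%N by rewrite {1}ha mulnDl.
  have acc : (a <= c)%N.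
    apply: (aG_lem (p1 := p1) (q := q) (b := b) a0); rewrite -?ep1 //.
  have kc : (c <= R * c)%N by rewrite leq_pmull.
  rewrite ep1 in hc hq ha eab *.
  case: ifP => H.
  + have Hn : (q * a <= h1.+1 * b)%N by move: H; lia.
    have := partD1 a0 b0 c0 hc cop ha hh hr hq hb Hn.
    have -> : ((a%:Z - R%:Z * (p1.+1)%:Z - 1) * b%:Z + (R%:Z + 1) * c%:Z - a%:Z)
        = Posz (h1 * b + R.+1 * c - a)%N.
      lia.
    done.
  + have Hn : (h1.+1 * b < q * a)%N by move: H; lia.
    have := partD2 a0 b0 c0 hc cop ha hh hr hq hb Hn.
    have -> : (((p1.+1)%:Z - 1) * b%:Z + R%:Z * c%:Z - a%:Z)
        = Posz (p1 * b + R * c - a)%N.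
      lia.
    done.
Qed.
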